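(* Let $d\ge2$, $n\ge1$ and let $H=(H_1,\dots,H_n):\mathbb{C}^n\to\mathbb{C}^n$ with $H_i(X)=\sum_{|\alpha|=d}\frac{H_{i,\alpha}}{\alpha!}X^\alpha$ for complex coefficients $H_{i,\alpha}$. Suppose the Jacobian matrix $JH$ satisfies $(JH)^p=0$ for some integer $1\le p\le n$. Then for every $k\ge1$, every $i\in[n]$, every $\alpha\in\mathbb{Z}^n_{\ge0}$ with $|\alpha|=(d-1)k+1$, and every length-$p$ shuffle class $\mathcal{S}$ in $\mathcal{C}_k^{(d)}$, $$\sum_{T\in\mathcal{S}}E_{i,\alpha,H}(T)=0.$$
   Context: A $d$-Catalan tree is a rooted planar tree in which each vertex has $0$ or $d$ children; $\mathcal{C}_k^{(d)}$ is the set of those with $k$ internal vertices (hence $(d-1)k+1$ leaves). For a path $(v_0,\dots,v_p)$ in $T$ ($v_i$ a child of $v_{i-1}$), the siblings of $v_1,\dots,v_p$ subtend $(d-1)p$ subtrees; the shuffle class $\mathrm{Sh}(T;v_0,\dots,v_p)\subseteq\mathcal{C}_k^{(d)}$ consists of all trees obtained from $T$ by rearranging these subtrees among the sibling positions, all else fixed; a length-$p$ shuffle class is any set of this form. A labelling of $T=(V,E)$ is a function $\tau:V\to[n]$; it is an $(i,\alpha)$ labelling if the root has type $i$ and exactly $\alpha_\ell$ leaves have type $\ell$ for each $\ell$. For an internal vertex $v$, $\mu(v)\in\mathbb{Z}^n_{\ge0}$ counts its children of each type. The $H$-weight of a labelling $\mathcal{T}=(T,\tau)$ is $\mathcal{E}_H(\mathcal{T})=\prod_{v\text{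 internal}}H_{\tau(v),\mu(v)}$, and $E_{i,\alpha,H}(T):=\sum_{(i,\alpha)\text{ labellings }\mathcal{T}\text{ of }T}\mathcal{E}_H(\mathcal{T})$. $(JH)_{i,j}=\partial H_i/\partial X_j$. *)

(* Defs.v *)
From HB Require Import structures.
From mathcomp Require Import all_boot all_order all_algebra.
From mathcomp Require Import mpoly complex Rstruct.
Set Implicit Arguments. Unset Strict Implicit. Unset Printing Implicit Defensive.
Import Order.TTheory GRing.Theory Num.Theory.
Local Open Scope ring_scope.

Definition C : numClosedFieldType := complex Rdefinitions.R.

Definition jacobian (n : nat) (H : 'I_n -> {mpoly C[n]}) : 'M[{mpoly C[n]}]_n :=
  \matrix_(i < n, j < n) mderiv j (H i).

Definition mxpow (R : pzRingType) (n : nat) (A : 'M[R]_n) (p : nat) : 'M[R]_n :=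
  iter p (fun B => B *m A) 1%:M.

Definition mfact (n : nat) (a : 'X_{1..n}) : nat := (\prod_(j < n) (a j)`!)%N.

(* H_{i,alpha}, determined by H_i = sum_alpha H_{i,alpha}/alpha! X^alpha *)
Definition Hcoef (n : nat) (H : 'I_n -> {mpoly C[n]}) (i : 'I_n) (a : 'X_{1..n}) : C :=
  (mfact a)%:R * (H i)@_a.

(* Unlabelled rooted planar trees: Leaf tt is a leaf, Node 0 ts an internal
   vertex with the ordered list of children ts. *)
Definition ctree := GenTree.tree unit.

Fixpoint dcat (d : nat) (t : ctree) : bool :=
  match t with
  | GenTree.Leaf _ => true
  | GenTree.Node m ts => (m == 0%N) && (size ts == d) && all (dcat d) ts
  end.

Fixpoint nint (t : ctree) : nat :=
  match t with
  | GenTree.Leaf _ => 0%N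
  | GenTree.Node _ ts => (sumn (map nint ts)).+1
  end.

Definition catalan (d k : nat) (t : ctree) : bool := dcat d t && (nint t == k).

Inductive ltree (n : nat) : Type :=
| LLeaf of 'I_n
| LNode of 'I_n & seq (ltree n).

Definition lroot (n : nat) (t : ltree n) : 'I_n :=
  match t with LLeaf j => j | LNode j _ => j end.

Fixpoint lleaves (n : nat) (t : ltree n) : seq 'I_n :=
  match t with
  | LLeaf j => [:: j]
  | LNode _ cs => flatten (map (@lleaves n) cs)
  end.

Definition mu (n : nat) (cs : seq (ltree n)) : 'X_{1..n} :=
  [multinom count (fun c => lroot c == l) cs | l < n].

Fixpoint lweight (n : nat) (Hc : 'I_n -> 'X_{1..n} -> C) (t : ltree n) : C :=
  match t with
  | LLeaf _ => 1
  | LNode j cs => Hc j (mu cs) * foldr (fun c r => lweight Hc c * r) 1 cs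
  end.

Definition cprod (A : Type) (ls : seq (seq A)) : seq (seq A) :=
  foldr (fun l acc => [seq x :: y | x <- l, y <- acc]) [:: [::]] ls.

Fixpoint labellings (n : nat) (t : ctree) : seq (ltree n) :=
  match t with
  | GenTree.Leaf _ => [seq LLeaf j | j <- enum 'I_n]
  | GenTree.Node _ ts =>
      [seq LNode j cs | j <- enum 'I_n, cs <- cprod (map (@labellings n) ts)]
  end.

Definition is_ia_labelling (n : nat) (i : 'I_n) (a : 'X_{1..n}) (t : ltree n) : bool :=
  (lroot t == i) && [forall l : 'I_n, count_mem l (lleaves t) == a l].

Definition Eweight (n : nat) (Hc : 'I_n -> 'X_{1..n} -> C) (i : 'I_n) (a : 'X_{1..n})
    (T : ctree) : C :=
  \sum_(t <- labellings n T | is_ia_labelling i a t) lweight Hc t.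

Fixpoint subt (t : ctree) (a : seq nat) : option ctree :=
  match a with
  | [::] => Some t
  | c :: a' =>
      match t with
      | GenTree.Leaf _ => None
      | GenTree.Node _ ts => if (c < size ts)%N then subt (nth t ts c) a' else None
      end
  end.

Fixpoint repl (t : ctree) (a : seq nat) (s : ctree) : ctree :=
  match a with
  | [::] => s
  | c :: a' =>
      match t with
      | GenTree.Leaf _ => t
      | GenTree.Node m ts => GenTree.Node m (set_nth t ts c (repl (nth t ts c) a' s))
      end
  end.

(* For the path from the root of t following child indices cs = (c_1,..,c_p):
   the subtrees subtended by the siblings of v_1, ..., v_p, listed level by
   level, left to right (the "sibling positions"). *)
Fixpoint sibs (t : ctree) (cs : seq nat) : seq ctree :=
  match cs with
  | [::] => [::]
  | c :: cs' =>
      match t with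
      | GenTree.Leaf _ => [::]
      | GenTree.Node _ ts => take c ts ++ drop c.+1 ts ++ sibs (nth t ts c) cs'
      end
  end.

(* put the subtrees of L into the sibling positions (in the order of sibs);
   rebuild t cs (sibs t cs) = t. *)
Fixpoint rebuild (t : ctree) (cs : seq nat) (L : seq ctree) : ctree :=
  match cs with
  | [::] => t
  | c :: cs' =>
      match t with
      | GenTree.Leaf _ => t
      | GenTree.Node m ts =>
          let k := (size ts).-1 in
          let L1 := take k L in
          GenTree.Node m (take c L1 ++ rebuild (nth t ts c) cs' (drop k L) :: drop c L1)
      end
  end.

(* Sh(T; v_0, ..., v_p), where v_0 is the vertex at address a0 and v_j is the
   c_j-th child of v_{j-1}, cs = (c_1, ..., c_p): all trees obtained from T by
   rearranging the sibling subtrees among the sibling positions (as a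
   duplicate-free list). *)
Definition shuffle_class (T : ctree) (a0 : seq nat) (cs : seq nat) : seq ctree :=
  let t0 := odflt T (subt T a0) in
  undup [seq repl T a0 (rebuild t0 cs L) | L <- permutations (sibs t0 cs)].

(* Main.v *)
Require Import Defs.
From HB Require Import structures.
From mathcomp Require Import all_boot all_order all_algebra.
From mathcomp Require Import mpoly complex Rstruct.
From mathcomp Require Import ring zify.
From Stdlib Require Import FunctionalExtensionality.
Import Order.TTheory GRing.Theory Num.Theory.
Local Open Scope ring_scope.
Set Implicit Arguments. Unset Strict Implicit. Unset Printing Implicit Defensive.
Section CProd.
Variable A : Type.

Lemma cprod_cons (x : seq A) L :
  cprod (x :: L) = [seq a :: b | a <- x, b <- cprod L].
Proof. by []. Qed.

Lemma big_cprod_cons (R : Type) (idx : R) (op : Monoid.com_law idx) (x : seq A) (L : seq (seq A)) (F : seq A -> R) :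
  \big[op/idx]_(s <- cprod (x :: L)) F s =
  \big[op/idx]_(a <- x) \big[op/idx]_(b <- cprod L) F (a :: b).
Proof. by rewrite cprod_cons big_allpairs_dep. Qed.

Lemma big_cprod_cat (R : Type) (idx : R) (op : Monoid.com_law idx) (L1 L2 : seq (seq A)) (F : seq A -> R) :
  \big[op/idx]_(s <- cprod (L1 ++ L2)) F s =
  \big[op/idx]_(a <- cprod L1) \big[op/idx]_(b <- cprod L2) F (a ++ b).
Proof.
elim: L1 F => [|x L1 IH] F /=.
  by rewrite big_cons big_nil Monoid.mulm1.
rewrite big_cprod_cons big_cprod_cons.
apply: eq_bigr => a _; exact: (IH (fun s => F (a :: s))).
Qed.

End CProd.

Lemma size_cprod (A : eqType) (L : seq (seq A)) s : s \in cprod L -> size s = size L.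
Proof.
elim: L s => [|x L IH] s /=; first by rewrite inE => /eqP ->.
case/allpairsPdep => a [b [_ Hb ->]] /=; by rewrite (IH b).
Qed.

Lemma mem_cprod (A : eqType) (L : seq (seq A)) s :
  (s \in cprod L) = (size s == size L) && all2 (fun a l => a \in l) s L.
Proof.
elim: L s => [|x L IH] s.
  by case: s => [|a s] //=; rewrite inE.
rewrite cprod_cons; case: s => [|a s] /=.
  by apply/negbTE/negP => /allpairsPdep [? [? [_ _ ]]].
apply/allpairsPdep/idP.
  case=> a' [b [Ha Hb [-> ->]]]; rewrite eqSS Ha /=; by rewrite IH in Hb.
rewrite eqSS => /andP [Hs /andP [Ha Hall]]; exists a, s; split => //.
by rewrite IH Hs.
Qed.

Lemma uniq_cprod (A : eqType) (L : seq (seq A)) : all uniq L -> uniq (cprod L).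
Proof.
elim: L => [|x L IH] // /andP [ux uL]; rewrite cprod_cons.
apply: allpairs_uniq_dep => //; first by move=> ? _; exact: IH.
move=> [a b] [a' b'] _ _ /= [E1 E2]; subst; congr Tagged; exact: E2.
Qed.

Lemma prod_sum_cprod (R : comRingType) (I J : Type) (xs : seq I) (E : seq J)
    (f : I -> J -> R) :
  \prod_(i <- xs) \sum_(a <- E) f i a =
  \sum_(as_ <- cprod (nseq (size xs) E)) \prod_(p <- zip xs as_) f p.1 p.2.
Proof.
elim: xs => [|i xs IH] /=; first by rewrite big_nil big_cons big_nil !big_nil addr0.
rewrite big_cons IH big_cprod_cons mulr_suml; apply: eq_bigr => a _.
rewrite mulr_sumr; apply: eq_bigr => b _; by rewrite big_cons.
Qed.

Lemma sum_cprod_cat (V : nmodType) (A : Type) (L1 L2 : seq (seq A)) (F : seq A -> V) :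
  \sum_(s <- cprod (L1 ++ L2)) F s =
  \sum_(a <- cprod L1) \sum_(b <- cprod L2) F (a ++ b).
Proof. exact: big_cprod_cat. Qed.
Section MF.
Variable n : nat.
Definition mul (ls : seq 'I_n) : 'X_{1..n} := [multinom count (pred1 l) ls | l < n].

Lemma mul_cons l ls : mul (l :: ls) = (U_(l) + mul ls)%MM.
Proof. by apply/mnmP => i; rewrite mnmDE !mnmE. Qed.

Lemma mul_cat a b : mul (a ++ b) = (mul a + mul b)%MM.
Proof. by apply/mnmP => i; rewrite mnmDE !mnmE count_cat. Qed.

Lemma mul_nil : mul [::] = 0%MM.
Proof. by apply/mnmP => i; rewrite !mnmE. Qed.

Variable R : comRingType.

Definition Mf (hc : 'X_{1..n} -> R) (ys : seq ('I_n -> R)) : R :=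
  \sum_(ls <- cprod (nseq (size ys) (enum 'I_n)))
     hc (mul ls) * \prod_(p <- zip ys ls) p.1 p.2.

Lemma Mf_slot hc ys1 z ys2 :
  Mf hc (ys1 ++ z :: ys2) =
  \sum_(l <- enum 'I_n) z l * Mf (fun m => hc (U_(l) + m)%MM) (ys1 ++ ys2).
Proof.
rewrite /Mf !size_cat /= !nseqD big_cprod_cat.
under eq_bigr do rewrite big_cprod_cons.
under [RHS]eq_bigr do rewrite big_cprod_cat mulr_sumr.
rewrite exchange_big /=; apply: eq_bigr => l _.
rewrite big_seq [RHS]big_seq; apply: eq_bigr => a Ha.
have Hsa : size ys1 = size a by rewrite (size_cprod Ha) size_nseq.
rewrite mulr_sumr big_seq [RHS]big_seq; apply: eq_bigr => b Hb.
rewrite !zip_cat // !big_cat /= big_cons /= mul_cat mul_cons mul_cat.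
rewrite addmA [(mul a + U_(l))%MM]addmC -addmA.
by ring.
Qed.

End MF.
Lemma zip_mapl (S T U : Type) (f : S -> U) (s : seq S) (t : seq T) :
  zip (map f s) t = map (fun p => (f p.1, p.2)) (zip s t).
Proof. by elim: s t => [|x s IH] [|y t] //=; rewrite IH. Qed.

Lemma sum_enum_pred1 (R : nmodType) n (a : 'I_n) (F : 'I_n -> R) :
  \sum_(l <- enum 'I_n) (if a == l then F l else 0) = F a.
Proof.
rewrite -big_mkcond -big_filter.
rewrite (@eq_filter _ _ (pred1 a)); last by move=> x /=; rewrite eq_sym.
by rewrite filter_pred1_uniq ?enum_uniq ?mem_enum // big_seq1.
Qed.

Definition ctree_ind2 (P : ctree -> Prop) (HL : forall x, P (GenTree.Leaf x))
  (HN : forall m ts, foldr (fun t acc => P t /\ acc) True ts -> P (GenTree.Node m ts)) :=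
  fix F t := match t return P t with
  | GenTree.Leaf x => HL x
  | GenTree.Node m ts => HN m ts ((fix G ts := match ts return foldr (fun t acc => P t /\ acc) True ts with [::] => I | t :: ts => conj (F t) (G ts) end) ts)
  end.

Lemma ctree_ind' (P : ctree -> Prop) :
  (forall x, P (GenTree.Leaf x)) ->
  (forall m ts, (forall t, t \in ts -> P t) -> P (GenTree.Node m ts)) ->
  forall t, P t.
Proof.
move=> HL HN; apply: ctree_ind2 => // m ts H; apply: HN.
elim: ts H => [|t ts IH] //= [Pt H] u; rewrite inE => /orP [/eqP ->|] //.
exact: IH.
Qed.

Lemma group_cprod (R : comRingType) n (B : Type) (root : B -> 'I_n) (g : B -> R)
   (Ls : seq (seq B)) (h : seq 'I_n -> R) :
  \sum_(cs <- cprod Ls) h (map root cs) * \prod_(c <- cs) g c =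
  \sum_(ls <- cprod (nseq (size Ls) (enum 'I_n)))
     h ls * \prod_(p <- zip Ls ls) (\sum_(c <- p.1 | root c == p.2) g c).
Proof.
elim: Ls h => [|x Ls IH] h.
  by rewrite /= !big_cons !big_nil.
rewrite /= !big_cprod_cons.
transitivity (\sum_(a <- x) g a * \sum_(b <- cprod Ls) h (root a :: map root b) * \prod_(c <- b) g c).
  apply: eq_bigr => a _; rewrite mulr_sumr.
  by apply: eq_bigr => b _; rewrite big_cons /=; ring.
transitivity (\sum_(a <- x) g a * \sum_(ls <- cprod (nseq (size Ls) (enum 'I_n)))
       h (root a :: ls) * \prod_(p <- zip Ls ls) \sum_(c <- p.1 | root c == p.2) g c).
  apply: eq_bigr => a _; congr (_ * _); exact: (IH (fun ls => h (root a :: ls))).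
transitivity (\sum_(l <- enum 'I_n) \sum_(a <- x | root a == l)
   g a * \sum_(ls <- cprod (nseq (size Ls) (enum 'I_n)))
       h (l :: ls) * \prod_(p <- zip Ls ls) \sum_(c <- p.1 | root c == p.2) g c).
  under [RHS]eq_bigr do rewrite big_mkcond.
  rewrite [RHS]exchange_big /=; apply: eq_bigr => a _.
  symmetry; exact: (sum_enum_pred1 (root a) (fun l => g a * \sum_(ls <- cprod (nseq (size Ls) (enum 'I_n))) h (l :: ls) * \prod_(p <- zip Ls ls) \sum_(c <- p.1 | root c == p.2) g c)).
apply: eq_bigr => l _.
rewrite [RHS](eq_bigr (fun ls => (\sum_(c <- x | root c == l) g c) *
    (h (l :: ls) * \prod_(p <- zip Ls ls) \sum_(c <- p.1 | root c == p.2) g c))); last first.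
  by move=> ls _; rewrite big_cons /=; ring.
by rewrite -mulr_sumr mulr_suml.
Qed.
Fixpoint Qv n (Hc : 'I_n -> 'X_{1..n} -> C) (t : ctree) : 'I_n -> {mpoly C[n]} :=
  match t with
  | GenTree.Leaf _ => fun j => 'X_j
  | GenTree.Node _ ts => fun j => Mf (fun m => (Hc j m)%:MP) (map (Qv Hc) ts)
  end.

Lemma mem_zip1 (S T : eqType) (s : seq S) (t : seq T) a b :
  (a, b) \in zip s t -> a \in s.
Proof.
elim: s t => [|x s IH] [|y t] //=.
rewrite in_cons => /orP [/eqP [-> _]|/IH H]; first by rewrite eqxx.
by rewrite H orbT.
Qed.

Lemma mu_mul n (cs : seq (ltree n)) : mu cs = mul (map (@lroot n) cs).
Proof. by apply/mnmP => l; rewrite !mnmE count_map. Qed.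

Lemma prod_leaves n (g : ltree n -> C) (cs : seq (ltree n)) :
  \prod_(c <- cs) ((g c)%:MP * 'X_[mul (lleaves c)]) =
  (\prod_(c <- cs) g c)%:MP * 'X_[mul (flatten (map (@lleaves n) cs))] :> {mpoly C[n]}.
Proof.
elim: cs => [|c cs IH] /=; first by rewrite !big_nil mul_nil mpolyX0 mulr1.
rewrite !big_cons IH mul_cat mpolyXD mpolyCM; ring.
Qed.

Lemma foldr_prod n (Hc : 'I_n -> 'X_{1..n} -> C) cs :
  foldr (fun c r => lweight Hc c * r) 1 cs = \prod_(c <- cs) lweight Hc c.
Proof. by elim: cs => [|c cs IH] /=; rewrite ?big_nil ?big_cons ?IH. Qed.

Lemma Qv_labellings n (Hc : 'I_n -> 'X_{1..n} -> C) (T : ctree) (j : 'I_n) :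
  \sum_(t <- labellings n T | lroot t == j) (lweight Hc t)%:MP * 'X_[mul (lleaves t)]
  = Qv Hc T j.
Proof.
elim/ctree_ind': T j => [x|m ts IH] j /=.
  rewrite big_map big_mkcond /= (eq_bigr (fun l => if j == l then 'X_l else 0)).
    by rewrite sum_enum_pred1.
  move=> l _ /=; rewrite [l == j]eq_sym; case: (j =P l) => [<-|_] //.
  by rewrite mul_cons mul_nil addm0 mpolyC1 mul1r.
rewrite big_mkcond big_allpairs_dep /=.
rewrite (eq_bigr (fun j' => if j == j' then
   \sum_(cs <- cprod [seq labellings n i | i <- ts])
      (lweight Hc (LNode j' cs))%:MP * 'X_[mul (lleaves (LNode j' cs))] else 0)); last first.
  move=> j' _; rewrite eq_sym; case: eqP => _ //.
  by rewrite big1.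
rewrite sum_enum_pred1 /=.
rewrite /Mf size_map.
transitivity (\sum_(cs <- cprod [seq labellings n i | i <- ts])
   (Hc j (mul (map (@lroot n) cs)))%:MP * \prod_(c <- cs) ((lweight Hc c)%:MP * 'X_[mul (lleaves c)])).
  apply: eq_bigr => cs _; rewrite prod_leaves foldr_prod mu_mul /= mpolyCM; ring.
rewrite (group_cprod (@lroot n) (fun c => (lweight Hc c)%:MP * 'X_[mul (lleaves c)])
   [seq labellings n i | i <- ts] (fun ls => (Hc j (mul ls))%:MP)) size_map.
apply: eq_bigr => ls _; congr (_ * _).
rewrite zip_mapl [in RHS]zip_mapl !big_map big_seq [RHS]big_seq.
apply: eq_bigr => p Hp /=; apply: IH.
by case: p Hp => t l /mem_zip1.
Qed.
Lemma sum_enum_ord (R : nmodType) n (F : 'I_n -> R) :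
  \sum_(l <- enum 'I_n) F l = \sum_(l < n) F l.
Proof. by rewrite big_enum. Qed.

Lemma Eweight_Qv n (Hc : 'I_n -> 'X_{1..n} -> C) i a T :
  Eweight Hc i a T = (Qv Hc T i)@_a.
Proof.
rewrite -Qv_labellings raddf_sum /= /Eweight big_mkcond [RHS]big_mkcond /=.
apply: eq_bigr => t _; rewrite /is_ia_labelling; case: (lroot t == i) => //=.
rewrite mcoeffCM mcoeffX.
have -> : [forall l, count_mem l (lleaves t) == a l] = (mul (lleaves t) == a).
  apply/forallP/eqP => [H|<- l]; last by rewrite mnmE.
  by apply/mnmP => l; rewrite mnmE; apply/eqP/H.
by case: (_ == a); rewrite ?mulr1 ?mulr0.
Qed.

Lemma repl_lin n (Hc : 'I_n -> 'X_{1..n} -> C) (a0 : seq nat) (T : ctree)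
    (ss : seq ctree) :
  subt T a0 != None -> (forall j, \sum_(s <- ss) Qv Hc s j = 0) ->
  forall j, \sum_(s <- ss) Qv Hc (repl T a0 s) j = 0.
Proof.
elim: a0 T => [|c a IH] T /=; first by move=> _ H.
case: T => [x|m ts] //=; case: ifP => // Hc' Hsub Hss j.
set child := nth _ ts c.
under eq_bigr => s _.
  rewrite set_nthE Hc' map_cat /= Mf_slot.
  over.
rewrite exchange_big /=; apply: big1 => l _.
rewrite -mulr_suml (IH child) ?mul0r //.
Qed.
Definition Amat n (R : comRingType) (hc : 'I_n -> 'X_{1..n} -> R)
    (ys : seq ('I_n -> R)) : 'M[R]_n :=
  \matrix_(j, l) Mf (fun m => hc j (U_(l) + m)%MM) ys.

Fixpoint chain n (R : comRingType) (hc : 'I_n -> 'X_{1..n} -> R) (k e : nat)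
    (ys : seq ('I_n -> R)) : 'M[R]_n :=
  match k with
  | 0 => 1%:M
  | k'.+1 => Amat hc (take e ys) *m chain hc k' e (drop e ys)
  end.

Definition colQ n (Hc : 'I_n -> 'X_{1..n} -> C) t : 'cV[{mpoly C[n]}]_n :=
  \col_j Qv Hc t j.

Definition hcC n (Hc : 'I_n -> 'X_{1..n} -> C) : 'I_n -> 'X_{1..n} -> {mpoly C[n]} :=
  fun j m => (Hc j m)%:MP.

Lemma rebuild_chain n (Hc : 'I_n -> 'X_{1..n} -> C) d (cs : seq nat) t L :
  dcat d t -> subt t cs != None -> size L = ((d - 1) * size cs)%N ->
  colQ Hc (rebuild t cs L) =
  chain (hcC Hc) (size cs) (d - 1) (map (Qv Hc) L) *m colQ Hc (odflt t (subt t cs)).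
Proof.
elim: cs t L => [|c cs IH] t L /=.
  by move=> _ _ _; rewrite mul1mx.
case: t => [x|m ts] //= /andP [/andP [_ /eqP Hsz] Hall].
case: ifP => // Hc' Hsub HL.
set child := nth _ ts c.
have Hch : dcat d child by apply: (allP Hall); rewrite mem_nth.
have HL' : size (drop (d - 1) L) = ((d - 1) * size cs)%N.
  by rewrite size_drop HL mulnS addKn.
have -> : odflt (GenTree.Node m ts) (subt child cs) = odflt child (subt child cs).
  by case: (subt child cs) Hsub.
rewrite -mulmxA -map_drop -(IH child) //.
apply/matrixP => j z; rewrite !mxE /= map_cat /= Mf_slot -map_cat cat_take_drop.
rewrite -sum_enum_ord; apply: eq_bigr => l _.
rewrite !mxE Hsz subn1 map_take mulrC; done.
Qed.
Lemma subt_cat (T : ctree) a b : subt T (a ++ b) = obind (fun t => subt t b) (subt T a).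
Proof.
elim: a T => [|c a IH] T //=.
by case: T => [x|m ts] //=; case: ifP.
Qed.

Lemma nth_take_cons (A : Type) (x0 : A) (s s' : seq A) y c :
  (c <= size s)%N -> nth x0 (take c s ++ y :: s') c = y.
Proof. by move=> H; rewrite nth_cat size_takel // ltnn subnn. Qed.

Lemma subt_repl (T : ctree) a0 x : subt T a0 != None -> subt (repl T a0 x) a0 = Some x.
Proof.
elim: a0 T => [|c a IH] T //=.
case: T => [y|m ts] //=; case: ifP => // Hc Hs.
rewrite size_set_nth (leq_trans Hc (leq_maxr _ _)) set_nthE Hc nth_take_cons ?IH //.
exact: ltnW.
Qed.

Lemma repl_inj (T : ctree) a0 x y : subt T a0 != None -> repl T a0 x = repl T a0 y -> x = y.
Proof. by move=> H E; have := subt_repl x H; rewrite E subt_repl // => -[]. Qed.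

Lemma sibs_rebuild (t : ctree) cs L :
  subt t cs != None -> size L = size (sibs t cs) -> sibs (rebuild t cs L) cs = L.
Proof.
elim: cs t L => [|c cs IH] t L /=.
  by move=> _; case: L.
case: t => [x|m ts] //=; case: ifP => // Hc Hs.
set child := nth _ ts c => HL.
have Hk : size (take (size ts).-1 L) = (size ts).-1.
  rewrite size_takel //; move: HL; rewrite !size_cat size_take size_drop Hc => ->; rewrite -subn1; move: Hc; set k := size ts; set k2 := size ts; set k3 := size (sibs _ _); lia.
have Hck : (c <= (size ts).-1)%N by rewrite -subn1; move: Hc; clear; lia.
set L1 := take (size ts).-1 L.
set R := rebuild child cs _.
have Hc1 : size (take c L1) = c by rewrite size_takel // Hk.
have E1 : take c (take c L1 ++ R :: drop c L1) = take c L1 by rewrite take_size_cat.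
have E2 : drop c.+1 (take c L1 ++ R :: drop c L1) = drop c L1.
  by rewrite -cat1s catA drop_size_cat // size_cat Hc1 addn1.
have E3 : nth (GenTree.Node m (take c L1 ++ R :: drop c L1)) (take c L1 ++ R :: drop c L1) c = R.
  by rewrite nth_take_cons // Hk.
rewrite E1 E2 E3 IH.
- by rewrite catA cat_take_drop cat_take_drop.
- have -> : child = nth (GenTree.Node m ts) ts c by apply: set_nth_default.
  by case: (subt _ cs) Hs.
- rewrite -/child size_drop HL !size_cat size_take size_drop Hc -subn1.
  move: Hc; set k := size ts; set k2 := size ts; set k3 := size (sibs child cs); lia.
Qed.

Lemma dcat_subt d (t s : ctree) a : dcat d t -> subt t a = Some s -> dcat d s.
Proof.
elim: a t => [|c a IH] t /=; first by move=> H [<-].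
case: t => [x|m ts] //= /andP [_ Hall]; case: ifP => // Hc.
by apply: IH; apply: (allP Hall); rewrite mem_nth.
Qed.

Lemma size_sibs d (t : ctree) cs :
  dcat d t -> subt t cs != None -> size (sibs t cs) = ((d - 1) * size cs)%N.
Proof.
elim: cs t => [|c cs IH] t /=; first by rewrite muln0.
case: t => [x|m ts] //= /andP [/andP [_ /eqP Hsz] Hall]; case: ifP => // Hc Hs.
rewrite !size_cat size_take size_drop Hc IH //; last by apply: (allP Hall); rewrite mem_nth.
rewrite -Hsz; move: Hc; clear; set k := size ts; set k2 := size ts; rewrite mulnS; lia.
Qed.
Definition Xv n : 'I_n -> {mpoly C[n]} := fun l => 'X_l.

Lemma mdeg_mul n (ls : seq 'I_n) : mdeg (mul ls) = size ls.
Proof.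
elim: ls => [|l ls IH]; first by rewrite mul_nil mdeg0.
by rewrite mul_cons mdegD mdeg1 IH.
Qed.

Lemma prod_X n (ls : seq 'I_n) : \prod_(l <- ls) ('X_l : {mpoly C[n]}) = 'X_[mul ls].
Proof.
elim: ls => [|l ls IH]; first by rewrite big_nil mul_nil mpolyX0.
by rewrite big_cons IH mul_cons mpolyXD.
Qed.

Lemma zip_nseq (A B : Type) (y : A) (ls : seq B) :
  zip (nseq (size ls) y) ls = map (fun l => (y, l)) ls.
Proof. by elim: ls => [|l ls IH] //=; rewrite IH. Qed.

Lemma mfactD1 n (m : 'X_{1..n}) l : mfact (U_(l) + m)%MM = (mfact m * (m l).+1)%N.
Proof.
rewrite /mfact (bigD1 l) //= [in RHS](bigD1 l) //= mnmDE mnm1E eqxx add1n factS.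
rewrite [RHS]mulnC mulnA; congr (_ * _)%N.
by apply: eq_bigr => i Hi; rewrite mnmDE mnm1E eq_sym (negbTE Hi).
Qed.

Lemma eq_addU n (l : 'I_n) (m b : 'X_{1..n}) :
  ((U_(l) + m)%MM == b) = ((0 < b l)%N && (m == b - U_(l))%MM).
Proof.
apply/eqP/andP => [<-|[Hb /eqP ->]].
  split; first by rewrite mnmDE mnm1E eqxx.
  by apply/eqP/mnmP => i; rewrite mnmBE mnmDE mnm1E addKn.
apply/mnmP => i; rewrite mnmDE mnmBE mnm1E.
case: eqP => [<-|_]; last by rewrite subn0.
by rewrite add1n subn1 prednK.
Qed.

Lemma count_words n k (b : 'X_{1..n}) : mdeg b = k ->
  ((\sum_(ls <- cprod (nseq k (enum 'I_n)) | mul ls == b) 1) * mfact b = k`!)%N.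
Proof.
elim: k b => [|k IH] b Hb.
  move/eqP: Hb; rewrite mdeg_eq0 => /eqP ->.
  rewrite /= big_cons big_nil mul_nil eqxx /mfact big1 // => i _.
  by rewrite mnm0E.
rewrite /= big_mkcond big_cprod_cons /= big_distrl /=.
transitivity (\sum_(l <- enum 'I_n) (k`! * b l))%N; last first.
  rewrite -big_distrr /= factS mulnC; congr (_ * _)%N.
  by rewrite -Hb mdegE sum_enum_ord.
apply: eq_bigr => l _.
rewrite -big_mkcond /=.
under eq_bigl do rewrite mul_cons eq_addU.
case: (posnP (b l)) => Hbl.
  by rewrite big_pred0 ?Hbl ?muln0.
rewrite (eq_bigl (fun ls => mul ls == (b - U_(l))%MM)); last by [].
have Hbb : b = (U_(l) + (b - U_(l)))%MM.
  by apply/esym/eqP; rewrite eq_addU Hbl eqxx.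
have -> : mfact b = (mfact (b - U_(l)) * b l)%N.
  by rewrite {1}Hbb mfactD1 mnmBE mnm1E eqxx subn1 prednK.
rewrite mulnA IH //.
by move: Hb; rewrite {1}Hbb mdegD mdeg1 add1n => -[].
Qed.

Lemma Amat_X d n (H : 'I_n -> {mpoly C[n]}) : (forall i, H i \is d.-homog) -> (1 <= d)%N ->
  Amat (hcC (Hcoef H)) (nseq (d - 1) (@Xv n)) = ((d - 1)`!)%:R *: jacobian H.
Proof.
move=> Hhom Hd; apply/matrixP => j l; rewrite !mxE /Mf size_nseq.
apply/mpolyP => b; rewrite mulr_natl mcoeffMn mcoeff_mderiv raddf_sum /=.
rewrite big_seq (eq_bigr (fun ls => if mul ls == b then Hcoef H j (U_(l) + b)%MM else 0)); last first.
  move=> ls Hls; have Hs := size_cprod Hls; rewrite size_nseq in Hs.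
  rewrite -Hs zip_nseq big_map prod_X mcoeffCM mcoeffX /hcC.
  by case: eqP => [->|_]; rewrite ?mulr1 ?mulr0.
rewrite -big_seq -big_mkcond /=.
rewrite (eq_bigr (fun _ => 1 * Hcoef H j (U_(l) + b)%MM)); last by move=> *; rewrite mul1r.
rewrite -mulr_suml.
have -> : \sum_(i <- cprod (nseq (d - 1)%N (enum 'I_n)) | mul i == b) (1 : C) =
    (\sum_(i <- cprod (nseq (d - 1)%N (enum 'I_n)) | mul i == b) 1)%N%:R.
  by rewrite natr_sum.
rewrite /Hcoef mfactD1 [(b + _)%MM]addmC.
case: (eqVneq (mdeg b) (d - 1)%N) => Hb.
  rewrite mulrA -natrM mulnA count_words // -mulrnA mulr_natl; congr (_ *+ _).
  by rewrite mulnC.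
rewrite big_seq_cond big1 ?mul0r; last first.
  move=> ls /andP [Hls /eqP E]; move/eqP: Hb; case.
  by rewrite -E mdeg_mul (size_cprod Hls) size_nseq.
rewrite (dhomog_nemf_coeff (Hhom j)) ?mul0rn //.
change (mdeg (U_(l) + b)%MM != d); rewrite mdegD mdeg1; apply/eqP => E; move/eqP: Hb; apply; rewrite -E; clear; lia.
Qed.
Lemma mxpowS (R : comRingType) n (A : 'M[R]_n) k : mxpow A k.+1 = A *m mxpow A k.
Proof.
elim: k => [|k IH]; first by rewrite /mxpow /= mul1mx mulmx1.
change (mxpow A k.+2) with (mxpow A k.+1 *m A).
by rewrite {1}IH -mulmxA.
Qed.

Lemma chain_nseq (R : comRingType) n (hc : 'I_n -> 'X_{1..n} -> R) e k Y :
  chain hc k e (nseq (e * k) Y) = mxpow (Amat hc (nseq e Y)) k.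
Proof.
elim: k => [|k IH]; first by [].
rewrite mxpowS -IH mulnS nseqD /= take_size_cat ?size_nseq //.
by rewrite drop_size_cat ?size_nseq.
Qed.

Lemma mxpow_map (R1 R2 : comRingType) (f : {rmorphism R1 -> R2}) n (A : 'M[R1]_n) k :
  mxpow (map_mx f A) k = map_mx f (mxpow A k).
Proof.
elim: k => [|k IH]; first by rewrite /mxpow /= map_mx1.
by rewrite !mxpowS IH map_mxM.
Qed.

Lemma mxpow_scale (R : comRingType) n (c : R) (A : 'M[R]_n) k :
  mxpow (c *: A) k = c ^+ k *: mxpow A k.
Proof.
elim: k => [|k IH]; first by rewrite expr0 scale1r.
by rewrite !mxpowS IH -scalemxAl -scalemxAr scalerA exprS.
Qed.

Lemma Mf_morph (R1 R2 : comRingType) (f : {rmorphism R1 -> R2}) n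
    (hc : 'X_{1..n} -> R1) (ys : seq ('I_n -> R1)) :
  f (Mf hc ys) = Mf (fun m => f (hc m)) (map (fun y l => f (y l)) ys).
Proof.
rewrite /Mf size_map rmorph_sum; apply: eq_bigr => ls _.
by rewrite rmorphM rmorph_prod zip_mapl big_map.
Qed.

Lemma Amat_morph (R1 R2 : comRingType) (f : {rmorphism R1 -> R2}) n
    (hc : 'I_n -> 'X_{1..n} -> R1) (ys : seq ('I_n -> R1)) :
  map_mx f (Amat hc ys) = Amat (fun j m => f (hc j m)) (map (fun y l => f (y l)) ys).
Proof. by apply/matrixP => j l; rewrite !mxE Mf_morph. Qed.

Section Expand.
Variables n q : nat.
Local Notation R := {mpoly C[n]}.
Local Notation S := {mpoly R[q]}.
Local Notation phi := (@mpolyC q R).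
Variables (hcR : 'I_n -> 'X_{1..n} -> R) (vv : 'I_q -> 'I_n -> R).
Local Notation Y := (fun l => \sum_(a <- enum 'I_q) 'X_a * phi (vv a l)).
Local Notation hcS := (fun j m => phi (hcR j m)).

Lemma prod_zip_X (ls : seq 'I_n) (bs : seq 'I_q) : size ls = size bs ->
  \prod_(p <- zip ls bs) ('X_p.2 * phi (vv p.2 p.1)) =
  'X_[mul bs] * phi (\prod_(p <- zip (map vv bs) ls) p.1 p.2).
Proof.
elim: ls bs => [|l ls IH] [|b bs] Hs; rewrite /= in Hs; try discriminate.
  have E1 : zip (@nil 'I_n) (@nil 'I_q) = [::] := erefl.
  have E2 : zip (map vv [::]) (@nil 'I_n) = [::] := erefl.
  by rewrite E1 E2 !big_nil mul_nil mpolyX0 mpolyC1 mulr1.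
case: Hs => Hs.
have E1 : zip (l :: ls) (b :: bs) = (l, b) :: zip ls bs := erefl.
have E2 : zip (map vv (b :: bs)) (l :: ls) = (vv b, l) :: zip (map vv bs) ls := erefl.
rewrite E1 E2 !big_cons (IH _ Hs) mul_cons mpolyXD mpolyCM -!mulrA.
rewrite -[(l, b).2]/b -[(l, b).1]/l -[(vv b, l).1]/(vv b) -[(vv b, l).2]/l.
by rewrite [(vv b l)%:MP * _]mulrCA.
Qed.

Lemma Amat_expand e :
  Amat hcS (nseq e Y) =
  \sum_(bs <- cprod (nseq e (enum 'I_q))) 'X_[mul bs] *: map_mx phi (Amat hcR (map vv bs)).
Proof.
apply/matrixP => j l; rewrite summxE !mxE /Mf size_nseq.
transitivity (\sum_(ls <- cprod (nseq e (enum 'I_n)))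
   \sum_(bs <- cprod (nseq e (enum 'I_q)))
     'X_[mul bs] * (phi (hcR j (U_(l) + mul ls)%MM) * phi (\prod_(p <- zip (map vv bs) ls) p.1 p.2))).
  rewrite big_seq [RHS]big_seq; apply: eq_bigr => ls Hls.
  have Hs := size_cprod Hls; rewrite size_nseq in Hs.
  rewrite -{1}Hs zip_nseq big_map prod_sum_cprod Hs mulr_sumr big_seq [RHS]big_seq.
  apply: eq_bigr => bs Hbs; have Hbs' := size_cprod Hbs; rewrite size_nseq in Hbs'.
  rewrite (@prod_zip_X ls bs); last by rewrite Hs Hbs'.
  by rewrite mulrCA.
rewrite exchange_big /=; apply: eq_big_seq => bs Hbs.
rewrite !mxE /Mf size_map rmorph_sum mulr_sumr.
have Hbs' := size_cprod Hbs; rewrite size_nseq in Hbs'.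
rewrite Hbs'; apply: eq_bigr => ls _; by rewrite rmorphM.
Qed.

Lemma chain_expand e k :
  chain hcS k e (nseq (e * k) Y) =
  \sum_(ws <- cprod (nseq (e * k) (enum 'I_q)))
     'X_[mul ws] *: map_mx phi (chain hcR k e (map vv ws)).
Proof.
elim: k => [|k IH].
  rewrite muln0.
  have E : cprod (nseq 0 (enum 'I_q)) = [:: [::]] := erefl.
  rewrite E big_cons big_nil addr0 mul_nil mpolyX0 scale1r.
  rewrite map_mx1; reflexivity.
have Et : take e (nseq (e * k.+1) Y) = nseq e Y.
  by rewrite mulnS nseqD take_size_cat // size_nseq.
have Ed : drop e (nseq (e * k.+1) Y) = nseq (e * k) Y.
  by rewrite mulnS nseqD drop_size_cat // size_nseq.
have Ec : chain hcS k.+1 e (nseq (e * k.+1) Y) =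
   Amat hcS (take e (nseq (e * k.+1) Y)) *m chain hcS k e (drop e (nseq (e * k.+1) Y)) := erefl.
rewrite Ec Et Ed Amat_expand IH mulnS nseqD sum_cprod_cat mulmx_suml.
apply: eq_big_seq => bs Hbs.
have Hbs' := size_cprod Hbs; rewrite size_nseq in Hbs'.
rewrite mulmx_sumr; apply: eq_bigr => ws _.
rewrite -scalemxAl -scalemxAr scalerA mul_cat mpolyXD.
have Ec2 : chain hcR k.+1 e (map vv (bs ++ ws)) =
   Amat hcR (take e (map vv (bs ++ ws))) *m chain hcR k e (drop e (map vv (bs ++ ws))) := erefl.
have Et2 : take e (map vv (bs ++ ws)) = map vv bs.
  by rewrite map_cat take_size_cat // size_map Hbs'.
have Ed2 : drop e (map vv (bs ++ ws)) = map vv ws.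
  by rewrite map_cat drop_size_cat // size_map Hbs'.
rewrite Ec2 Et2 Ed2 map_mxM; reflexivity.
Qed.

End Expand.
Lemma map_val_pmap_insub q (s : seq nat) : all (fun i => i < q)%N s ->
  map val (pmap (insub : nat -> option 'I_q) s) = s.
Proof.
elim: s => [|x s IH] //= /andP [Hx Hs].
by rewrite insubT /= IH.
Qed.

Lemma all2_nseq_enum q (ws : seq 'I_q) :
  all2 (fun a l => a \in l) ws (nseq (size ws) (enum 'I_q)).
Proof. by elim: ws => [|a ws IH] //=; rewrite mem_enum IH. Qed.

Section Reindex.
Variables (X : eqType) (S0 : seq X) (x0 : X).
Local Notation U := (undup S0).
Local Notation q := (size (undup S0)).
Definition fU (a : 'I_q) : X := nth x0 U a.

Lemma fU_inj : injective fU.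
Proof.
move=> a b /eqP; rewrite /fU nth_uniq ?undup_uniq // => /eqP; exact: val_inj.
Qed.

Definition m0 : 'X_{1..q} := [multinom count_mem (fU a) S0 | a < q].

Lemma count_map_fU (ws : seq 'I_q) a : count_mem (fU a) (map fU ws) = count_mem a ws.
Proof. by rewrite count_map; apply: eq_count => b /=; exact: (inj_eq fU_inj). Qed.

Lemma reindex_perms (V : nmodType) (F : seq X -> V) :
  \sum_(L <- permutations S0) F L =
  \sum_(ws <- cprod (nseq (size S0) (enum 'I_q)) | mul ws == m0) F (map fU ws).
Proof.
rewrite -[RHS]big_filter.
transitivity (\sum_(L <- map (map fU) [seq ws <- cprod (nseq (size S0) (enum 'I_q)) | mul ws == m0]) F L); last by rewrite big_map.
apply: perm_big; apply: uniq_perm.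
- exact: permutations_uniq.
- rewrite map_inj_uniq ?filter_uniq ?uniq_cprod //; last exact: inj_map fU_inj.
  by rewrite all_nseq enum_uniq orbT.
move=> L; rewrite mem_permutations; apply/idP/idP.
- move=> HL; apply/mapP.
  have HLU : forall x, x \in L -> x \in U by move=> x; rewrite mem_undup (perm_mem HL).
  set ws := pmap (insub : nat -> option 'I_q) (map (index^~ U) L).
  have Hws : map val ws = map (index^~ U) L.
    apply: map_val_pmap_insub; apply/allP => i /mapP [x Hx ->].
    by rewrite index_mem HLU.
  have HfL : map fU ws = L.
    have -> : map fU ws = map (nth x0 U) (map val ws) by rewrite -map_comp.
    rewrite Hws -map_comp.
    rewrite -[RHS]map_id; apply/eq_in_map => x Hx /=; exact: nth_index (HLU x Hx).
  exists ws => //.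
  rewrite mem_filter mem_cprod size_nseq.
  have Hsz : size ws = size S0 by rewrite -(size_map fU) HfL (perm_size HL).
  rewrite Hsz eqxx /= -Hsz all2_nseq_enum andbT.
  apply/eqP/mnmP => a; rewrite !mnmE -count_map_fU HfL.
  by apply/eqP; rewrite -/(count_mem (fU a) L) (permP HL).
- case/mapP => ws; rewrite mem_filter => /andP [/eqP Hm Hws] ->.
  apply/allP => x _ /=; apply/eqP.
  case: (boolP (x \in U)) => HxU.
    have Hi : (index x U < q)%N by rewrite index_mem.
    have -> : x = fU (Ordinal Hi) by rewrite /fU /= nth_index.
    rewrite count_map_fU.
    by move/mnmP: Hm => /(_ (Ordinal Hi)); rewrite !mnmE.
  have H1 : count_mem x S0 = 0%N by apply/count_memPn; rewrite -mem_undup.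
  rewrite H1; apply/count_memPn; apply/mapP => -[b _ Eb].
  by move: HxU; rewrite Eb /fU mem_nth.
Qed.

End Reindex.
Lemma heart d n p (H : 'I_n -> {mpoly C[n]}) : (2 <= d)%N ->
  (forall i, H i \is d.-homog) -> mxpow (jacobian H) p = 0 ->
  forall (X : eqType) (S : seq X) (w : X -> 'I_n -> {mpoly C[n]}),
  size S = ((d - 1) * p)%N ->
  \sum_(L <- permutations S) chain (hcC (Hcoef H)) p (d - 1) (map w L) = 0.
Proof.
move=> Hd Hhom Hnil X S w HS.
case: S HS => [|x0 S1] HS.
  have Hp : p = 0%N by move: HS Hd => /= HS Hd; nia.
  subst p.
  have E : permutations (@nil X) = [:: [::]] := erefl.
  rewrite E big_cons big_nil addr0.
  have E2 : chain (hcC (Hcoef H)) 0 (d - 1) (map w [::]) = 1%:M := erefl.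
  by rewrite E2 -Hnil.
set S := x0 :: S1.
set e := (d - 1)%N.
set hcR := hcC (Hcoef H).
rewrite (reindex_perms S x0 (fun L => chain hcR p e (map w L))).
set q := size (undup S).
set vv : 'I_q -> 'I_n -> {mpoly C[n]} := fun a => w (@fU X S x0 a).
have Emap : forall ws : seq 'I_q, map w (map (@fU X S x0) ws) = map vv ws.
  by move=> ws; rewrite -map_comp.
set Y : 'I_n -> {mpoly {mpoly C[n]}[q]} :=
  fun l => \sum_(a <- enum 'I_q) 'X_a * (vv a l)%:MP.
set psi := (@mpolyC q _) \o (@mpolyC n C).
set ev := mmap psi Y.
have Hev : Amat (fun j m => (hcR j m)%:MP) (nseq e Y) = map_mx ev (Amat hcR (nseq e (@Xv n))).
  rewrite Amat_morph map_nseq.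
  have -> : (fun l => ev (Xv l)) = Y.
    by apply: functional_extensionality => l; rewrite /ev /Xv mmapX mmap1U.
  have -> : (fun j m => ev (hcR j m)) = (fun j m => (hcR j m)%:MP).
    apply: functional_extensionality => j; apply: functional_extensionality => m.
    by rewrite /ev /hcR /hcC mmapC.
  by [].
have Hzero : \sum_(ws <- cprod (nseq (e * p) (enum 'I_q)))
     'X_[mul ws] *: map_mx (@mpolyC q _) (chain hcR p e (map vv ws)) = 0.
  rewrite -chain_expand chain_nseq Hev mxpow_map /hcR (Amat_X Hhom); last by move: Hd; clear; lia.
  rewrite mxpow_scale Hnil scaler0.
  apply/matrixP => i j; rewrite !mxE; exact: raddf0.
rewrite HS.
apply/matrixP => j l; rewrite summxE [RHS]mxE.
move/matrixP: Hzero => /(_ j l); rewrite summxE mxE => /(congr1 (mcoeff (m0 S x0))).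
rewrite raddf_sum raddf0 => Hz.
rewrite -[X in _ = X]Hz.
rewrite big_mkcond; apply: eq_bigr => ws _.
rewrite Emap !mxE.
set M := chain hcR p e _ j l.
rewrite [X in _ = X]/= mulrC mcoeffCM mcoeffX.
case: (mul ws == m0 S x0).
  by rewrite mulr1.
by rewrite mulr0.
Qed.

Unset Implicit Arguments. Set Strict Implicit. Set Printing Implicit Defensive.

Theorem lemma3p3 (d n p : nat) (H : 'I_n -> {mpoly C[n]}) :
  (2 <= d)%N -> (1 <= n)%N ->
  (forall i, H i \is d.-homog) ->
  (1 <= p <= n)%N ->
  mxpow (jacobian H) p = 0 ->
  forall (k : nat), (1 <= k)%N ->
  forall (i : 'I_n) (a : 'X_{1..n}), mdeg a = ((d - 1) * k + 1)%N ->
  forall (T : ctree) (a0 cs : seq nat),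
    catalan d k T -> size cs = p -> subt T (a0 ++ cs) != None ->
    \sum_(T' <- shuffle_class T a0 cs) Eweight (Hcoef H) i a T' = 0.
Proof.
move=> Hd Hn Hhom Hp Hnil k Hk i a Ha T a0 cs Hcat Hcs Hsub.
rewrite /shuffle_class.
rewrite subt_cat in Hsub.
case E0: (subt T a0) Hsub => [t0|] //= Hsub0.
have Ha0 : subt T a0 != None by rewrite E0.
have Hdt0 : dcat d t0 by apply: (dcat_subt (t := T) (a := a0)) => //; case/andP: Hcat.
set S := sibs t0 cs.
have HS : size S = ((d - 1) * p)%N by rewrite /S (size_sibs Hdt0) // Hcs.
have Hsz : forall L, L \in permutations S -> size L = size S.
  by move=> L; rewrite mem_permutations => /perm_size.
rewrite undup_id; last first.
  rewrite map_inj_in_uniq ?permutations_uniq // => L1 L2 H1 H2 /(repl_inj Ha0) E.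
  by rewrite -(sibs_rebuild Hsub0 (Hsz _ H1)) E sibs_rebuild // Hsz.
rewrite big_map.
under eq_bigr do rewrite Eweight_Qv.
rewrite -raddf_sum /=.
have -> : \sum_(L <- permutations S) Qv (Hcoef H) (repl T a0 (rebuild t0 cs L)) i = 0.
  rewrite -(big_map (rebuild t0 cs) xpredT (fun s => Qv (Hcoef H) (repl T a0 s) i)).
  apply: (repl_lin Ha0) => j; rewrite big_map.
  transitivity ((\sum_(L <- permutations S) colQ (Hcoef H) (rebuild t0 cs L)) j 0).
    by rewrite summxE; apply: eq_bigr => L _; rewrite mxE.
  rewrite big_seq (eq_bigr (fun L => chain (hcC (Hcoef H)) (size cs) (d - 1)
     (map (Qv (Hcoef H)) L) *m colQ (Hcoef H) (odflt t0 (subt t0 cs)))); last first.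
    by move=> L HL; rewrite (rebuild_chain _ Hdt0) // Hsz // HS Hcs.
  rewrite -big_seq -mulmx_suml Hcs (heart Hd Hhom Hnil) ?mul0mx ?mxE //.
by rewrite raddf0.
Qed.
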